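(* Let $K\ge 2$ and positive integers $M,N,d$ with $d\le\min(M,N)$. If the symmetric system $(M\times N,d)^K$ is proper, then \[ \frac{dK}{\min(M,N)}\le 1+\frac{\max(M,N)}{\min(M,N)}-\frac{d}{\min(M,N)}. \]
   Context: $(M\times N,d)^K$ is the $K$-user interference network where every transmitter has $M$ antennas, every receiver has $N$ antennas and every user demands $d$ degrees of freedom. Associate abstract variables: for each transmitter $j$ and $n\in\{1,\dots,d\}$, $M-d$ variables $x^{[j]}_{n,i}$; for each receiver $k$ and $m\in\{1,\dots,d\}$, $N-d$ variables $y^{[k]}_{m,i}$. Equations are the symbols $E^{mn}_{kj}$ for $j\ne k$, $m,n\in\{1,\dots,d\}$, with $\mathrm{var}(E^{mn}_{kj})=\{x^{[j]}_{n,i}\}_i\cup\{y^{[k]}_{m,i}\}_i$; $\mathcal E$ is the set of all equations. The system is proper if for every $S\subseteq\mathcal E$, $|S|\le\left|\bigcup_{E\in S}\mathrm{var}(E)\right|$. *)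

(* Defs.v *)
From HB Require Import structures.
From mathcomp Require Import all_boot all_order all_algebra.
Set Implicit Arguments. Unset Strict Implicit. Unset Printing Implicit Defensive.

(* (M x N, d)^K interference network.
   Variables: x^{[j]}_{n,i}  (j : 'I_K, n : 'I_d, i : 'I_(M-d))   -- inl
              y^{[k]}_{m,i}  (k : 'I_K, m : 'I_d, i : 'I_(N-d))   -- inr *)
Definition var_t (K M N d : nat) : finType :=
  (('I_K * 'I_d * 'I_(M - d)) + ('I_K * 'I_d * 'I_(N - d)))%type.

(* Equation symbols E^{mn}_{kj} encoded as (k, j, m, n). *)
Definition eqn_t (K d : nat) : finType := ('I_K * 'I_K * 'I_d * 'I_d)%type.

Definition eqns (K d : nat) : {set eqn_t K d} :=
  [set e : eqn_t K d | e.1.1.1 != e.1.1.2].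

Definition var_of (K M N d : nat) (e : eqn_t K d) : {set var_t K M N d} :=
  [set v : var_t K M N d |
    match v with
    | inl (j', n', _) => (j' == e.1.1.2) && (n' == e.2)
    | inr (k', m', _) => (k' == e.1.1.1) && (m' == e.1.2)
    end].

Definition proper_system (K M N d : nat) : Prop :=
  forall S : {set eqn_t K d}, S \subset eqns K d ->
    #|S| <= #|\bigcup_(e in S) var_of M N e|.

(* Main.v *)
Require Import Defs.
From Stdlib Require Import Lia.
From HB Require Import structures.
From mathcomp Require Import all_boot all_order all_algebra.
Import Order.TTheory GRing.Theory Num.Theory.

Lemma card_eqns (K d : nat) : #|eqns K d| = K * K * d * d - K * d * d.
Proof.
pose f := fun x : 'I_K * 'I_d * 'I_d => ((x.1.1, x.1.1, x.1.2, x.2) : eqn_t K d).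
have finj : injective f by move=> [[a b] c] [[a' b'] c'] [-> _ -> ->].
have ediag : [set e : eqn_t K d | e.1.1.1 == e.1.1.2] = f @: setT.
  apply/setP => -[[[k j] m] n]; rewrite inE; apply/idP/imsetP => /=.
    by move/eqP => ->; exists (j, m, n); rewrite ?inE.
  by case=> x _ [-> -> _ _].
have eC : eqns K d = ~: [set e : eqn_t K d | e.1.1.1 == e.1.1.2].
  by apply/setP => e; rewrite !inE.
have := cardsC [set e : eqn_t K d | e.1.1.1 == e.1.1.2].
rewrite -eC ediag card_imset // cardsT /eqn_t !card_prod !card_ord => <-.
by rewrite addKn.
Qed.

Theorem corollary1 (K M N d : nat) :
  (2 <= K)%N -> (0 < M)%N -> (0 < N)%N -> (0 < d)%N -> (d <= minn M N)%N ->
  proper_system K M N d ->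
  ((d * K)%:R / (minn M N)%:R
     <= 1 + (maxn M N)%:R / (minn M N)%:R - d%:R / (minn M N)%:R :> rat)%R.
Proof.
move=> K2 M0 N0 d0 dmin P.
have := P (eqns K d) (subxx _).
rewrite card_eqns => H.
have H2 : (#|\bigcup_(e in eqns K d) var_of M N e| <= K*d*(M-d) + K*d*(N-d))%N.
  apply: leq_trans (max_card _) _.
  by rewrite /var_t card_sum !card_prod !card_ord.
have Hn := leq_trans H H2.
have dM : (d <= M)%N by apply: leq_trans dmin (geq_minl _ _).
have dN : (d <= N)%N by apply: leq_trans dmin (geq_minr _ _).
have key : (d * K + d <= minn M N + maxn M N)%N.
  rewrite addn_min_max.
  have e1 : (K * K * d * d - K * d * d = K * d * ((K - 1) * d))%N.
    by rewrite mulnBl mul1n mulnBr !mulnA [K * d * K]mulnAC.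
  have e2 : (K * d * (M - d) + K * d * (N - d) = K * d * ((M - d) + (N - d)))%N.
    by rewrite mulnDr.
  move: Hn; rewrite e1 e2 leq_pmul2l ?muln_gt0 ?d0 ?(leq_trans _ K2) // => Hk.
  have -> : (d * K + d = (K - 1) * d + d + d)%N.
    by rewrite mulnBl mul1n subnK ?(mulnC d K) // leq_pmull // ltnW.
  apply: leq_trans (leq_add (leq_add Hk (leqnn d)) (leqnn d)) _.
  by rewrite (addnAC (M - d)) subnK // -addnA subnK.
have m0 : (0 < minn M N)%N by rewrite leq_min M0 N0.
have -> : (1 + (maxn M N)%:R / (minn M N)%:R - d%:R / (minn M N)%:R
          = ((minn M N)%:R + (maxn M N)%:R - d%:R) / (minn M N)%:R :> rat)%R.
  by rewrite mulrBl mulrDl divff // pnatr_eq0 -lt0n.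
rewrite ler_pM2r ?invr_gt0 ?ltr0n // lerBrDr -!natrD ler_nat.
by [].
Qed.
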